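(* Let $n\ge 7$ and let $G$ be one of the following graphs: $K_1\vee \frac{n-1}{4}K_4$ with $n\equiv 1\pmod 4$; $K_1\vee (K_1\cup \frac{n-2}{4}K_4)$ with $n\equiv 2\pmod 4$; $K_1\vee (K_{1,1}\cup \frac{n-3}{4}K_4)$ with $n\equiv 3\pmod 4$; or $K_1\vee (K_{1,s}^+\cup \frac{n-s-2}{4}K_4)$ with $2\le s\le n-6$. Then $q(G)<q(K_{1,1,n-2}^+)$.
   Context: $q(G)$ denotes the largest eigenvalue of the signless Laplacian matrix $Q(G)=D(G)+A(G)$ ($A(G)$ adjacency matrix, $D(G)$ diagonal degree matrix). $K_m$ is the complete graph on $m$ vertices, $kH$ is the disjoint union of $k$ copies of $H$, $\cup$ is disjoint union, and $G\vee H$ is the join (disjoint union plus all edges between $V(G)$ and $V(H)$). $K_{1,s}$ is the star with $s$ leaves; for $s\ge2$, $K_{1,s}^+$ is obtained from $K_{1,s}$ by adding one edge between two leaves. $K_{1,1,n-2}^+$ is obtained from the complete tripartite graph $K_{1,1,n-2}$ by adding one edge inside the part of size $n-2$. In the last family it is implicit that $\frac{n-s-2}{4}$ is an integer. *)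

(* Defs.v *)
From HB Require Import structures.
From mathcomp Require Import all_boot all_order all_algebra.
From mathcomp Require Import reals.
Set Implicit Arguments. Unset Strict Implicit. Unset Printing Implicit Defensive.
Import Order.TTheory GRing.Theory Num.Theory.

(* A finite simple graph: finite vertex type and an adjacency relation.
   All the constructions below produce symmetric irreflexive relations. *)
Record graph := Graph { gV : finType; gE : rel gV }.

Definition gunion (G H : graph) : graph :=
  @Graph (gV G + gV H)%type (fun x y => match x, y with
    | inl a, inl b => gE a b
    | inr a, inr b => gE a b
    | _, _ => false end).

Definition gjoin (G H : graph) : graph :=
  @Graph (gV G + gV H)%type (fun x y => match x, y with
    | inl a, inl b => gE a b
    | inr a, inr b => gE a b
    | _, _ => true end).

Definition gnull : graph := @Graph void (fun _ _ => false).

Definition Kc (m : nat) : graph := @Graph 'I_m (fun i j => i != j).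

Definition copies (k : nat) (H : graph) : graph := iter k (gunion H) gnull.

Definition star (s : nat) : graph :=
  @Graph 'I_s.+1 (fun i j => (i != j) && (((i : nat) == 0) || ((j : nat) == 0))).

(* K_{1,s}^+ : star plus the edge between leaves 1 and 2 (s >= 2) *)
Definition starplus (s : nat) : graph :=
  @Graph 'I_s.+1 (fun i j => ((i != j) && (((i : nat) == 0) || ((j : nat) == 0)))
     || (((i : nat) == 1) && ((j : nat) == 2)) || (((i : nat) == 2) && ((j : nat) == 1))).

(* K_{1,1,n-2}^+ on vertices 0..n-1: parts {0}, {1}, {2,...,n-1},
   plus the edge {2,3} inside the large part *)
Definition K11plus (n : nat) : graph :=
  @Graph 'I_n (fun i j => (i != j) &&
     [|| (i : nat) < 2, (j : nat) < 2,
         ((i : nat) == 2) && ((j : nat) == 3) | ((i : nat) == 3) && ((j : nat) == 2)]).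

Definition deg (G : graph) (v : gV G) : nat := #|[pred u | gE v u]|.

Definition sQ (R : realType) (G : graph) : 'M[R]_#|gV G| :=
  \matrix_(i, j) (((i == j)%:R * (deg (enum_val i))%:R)%R
                  + (gE (enum_val i) (enum_val j))%:R)%R.

Definition is_q (R : realType) (G : graph) (a : R) : Prop :=
  eigenvalue (sQ R G) a /\ (forall b, eigenvalue (sQ R G) b -> (b <= a)%R).

Inductive lem_family (n : nat) : graph -> Prop :=
| fam1 : n %% 4 = 1 -> lem_family n (gjoin (Kc 1) (copies ((n - 1) %/ 4) (Kc 4)))
| fam2 : n %% 4 = 2 ->
    lem_family n (gjoin (Kc 1) (gunion (Kc 1) (copies ((n - 2) %/ 4) (Kc 4))))
| fam3 : n %% 4 = 3 ->
    lem_family n (gjoin (Kc 1) (gunion (star 1) (copies ((n - 3) %/ 4) (Kc 4))))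
| fam4 (s : nat) : 2 <= s -> s <= n - 6 -> (n - s - 2) %% 4 = 0 ->
    lem_family n (gjoin (Kc 1) (gunion (starplus s) (copies ((n - s - 2) %/ 4) (Kc 4)))).

(* Main.v *)
Require Import Defs.
From HB Require Import structures.
From mathcomp Require Import all_boot all_order all_algebra.
From mathcomp Require Import reals.
From Stdlib Require Import Classical.
From mathcomp Require Import ring lra zify.
Import Order.TTheory GRing.Theory Num.Theory.
Set Implicit Arguments. Unset Strict Implicit. Unset Printing Implicit Defensive.
Local Open Scope ring_scope.

Section Gen.
Variable R : realType.

Definition Qf (G : graph) (y : gV G -> R) (v : gV G) : R :=
  \sum_w (gE v w)%:R * (y v + y w).

Definition symg (G : graph) := forall x y : gV G, gE x y = gE y x.

Lemma sum_enum (T : finType) (F : T -> R) :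
  \sum_(i < #|T|) F (enum_val i) = \sum_w F w.
Proof.
by rewrite [RHS](reindex (enum_val : 'I_#|T| -> T)) //; apply: onW_bij; exact: enum_val_bij.
Qed.

Lemma degR (G : graph) (v : gV G) : (deg v)%:R = \sum_w (gE v w)%:R :> R.
Proof.
rewrite /deg -sum1_card natr_sum big_mkcond /=; apply: eq_bigr => w _.
by rewrite inE; case: (gE v w).
Qed.

Lemma row_Q (G : graph) (hs : symg G) (x : gV G -> R) j :
  ((\row_i x (enum_val i)) *m sQ R G) 0 j = Qf x (enum_val j).
Proof.
rewrite !mxE.
under eq_bigr => i _ do rewrite !mxE mulrDr.
rewrite big_split /=.
rewrite (bigD1 j) //= big1 ?addr0; last first.
  by move=> i /negPf ->; rewrite mul0r mulr0.
rewrite eqxx mul1r /Qf.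
under [X in _ = X]eq_bigr => w _ do rewrite mulrDr.
rewrite big_split /=; congr (_ + _).
  by rewrite -big_distrl /= -degR mulrC.
rewrite -(sum_enum (fun w => (gE (enum_val j) w)%:R * x w)).
by apply: eq_bigr => i _; rewrite hs mulrC.
Qed.


Lemma eig_of_fun (G : graph) (hs : symg G) (x : gV G -> R) (l : R) w0 :
  x w0 != 0 -> (forall w, Qf x w = l * x w) -> eigenvalue (sQ R G) l.
Proof.
move=> xw0 Hx; apply/eigenvalueP; exists (\row_i x (enum_val i)).
  apply/rowP => j; rewrite (row_Q hs).
  by rewrite !mxE; apply: Hx.
apply/eqP => /rowP /(_ (enum_rank w0)); rewrite !mxE enum_rankK => /eqP.
by rewrite (negPf xw0).
Qed.

Lemma eig_le (G : graph) (hs : symg G) (y : gV G -> R) (c b : R) :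
  (forall w, 0 < y w) -> (forall w, Qf y w <= c * y w) ->
  eigenvalue (sQ R G) b -> b <= c.
Proof.
move=> ypos Hy /eigenvalueP [v Hv vnz].
pose x w := v 0 (enum_rank w).
have vE : v = \row_i x (enum_val i).
  by apply/rowP => i; rewrite !mxE /x enum_valK.
have Hx : forall w, Qf x w = b * x w.
  move=> w; move/rowP: (Hv) => /(_ (enum_rank w)).
  by rewrite /= {1}vE (row_Q hs) enum_rankK mxE.
have [w1 xw1] : exists w1, x w1 != 0.
  apply/not_all_not_ex => H; apply/negP: vnz; apply/negPn/eqP/rowP => i.
  by rewrite vE !mxE; apply/eqP/negPn/negP; apply: H.
pose w0 := Order.arg_max w1 xpredT (fun w => `|x w| / y w).
have w0max : forall w, `|x w| / y w <= `|x w0| / y w0.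
  by rewrite /w0; case: (@Order.TotalTheory.arg_maxP _ _ _ w1 xpredT (fun w => `|x w| / y w) isT) => i _ Hi w; exact: Hi.
set r := `|x w0| / y w0.
have rpos : 0 < r.
  apply: lt_le_trans (w0max w1); apply: divr_gt0 => //.
  by rewrite normr_gt0.
have xle : forall w, `|x w| <= r * y w.
  by move=> w; rewrite -ler_pdivrMr // w0max.
have x0pos : 0 < `|x w0|.
  by have := rpos; rewrite /r pmulr_lgt0 // invr_gt0.
have : `|b| * `|x w0| <= c * `|x w0|.
  rewrite -normrM -Hx /Qf.
  apply: le_trans (ler_norm_sum _ _ _) _.
  apply: (@le_trans _ _ (r * Qf y w0)).
    rewrite /Qf mulr_sumr; apply: ler_sum => w _.
    rewrite normrM ger0_norm ?ler0n // mulrCA; apply: ler_wpM2l; first exact: ler0n.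
    rewrite mulrDr; apply: le_trans (ler_normD _ _) _.
    by apply: lerD; apply: xle.
  apply: (@le_trans _ _ (r * (c * y w0))).
    by apply: ler_wpM2l; [exact: ltW|apply: Hy].
  rewrite /r mulrCA -mulrA [_^-1 * _]mulrC divff ?mulr1 // gt_eqF //.
rewrite ler_pM2r // => H; exact: le_trans (ler_norm b) H.
Qed.


Lemma max_eig (m : nat) (A : 'M[R]_m) a0 : eigenvalue A a0 ->
  exists a, eigenvalue A a /\ (forall b, eigenvalue A b -> b <= a).
Proof.
move=> H0; apply: NNPP => Hno.
have step : forall a, eigenvalue A a -> exists b, eigenvalue A b /\ a < b.
  move=> a Ha; apply: NNPP => H; apply: Hno; exists a; split=> // b Hb.
  rewrite leNgt; apply/negP => ab; apply: H; exists b; split=> //.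
have seqs : forall k, exists s : seq R,
    [/\ size s = k.+1, all (eigenvalue A) s & sorted (fun x y => y < x) s].
  elim=> [|k [s [Hs Ha Hsort]]]; first by exists [:: a0]; rewrite /= H0.
  case: s Hs Ha Hsort => // x s' Hs /andP [Hx Ha] Hsort.
  have [b [Hb xb]] := step x Hx.
  exists [:: b, x & s']; split=> //=; first by case: Hs => ->.
    by rewrite Hb Hx.
  by rewrite xb.
have [s [Hs Ha Hsort]] := seqs (size (char_poly A)).
have : (size s < size (char_poly A))%N.
  apply: max_poly_roots.
  - by apply: monic_neq0; apply: char_poly_monic.
  - by apply/allP => z /(allP Ha); rewrite eigenvalue_root_char.
  - apply: (sorted_uniq _ _ Hsort).
    + by move=> ? ? ? h1 h2; exact: lt_trans h2 h1.
    + by move=> ?; rewrite /= ltxx.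
by rewrite Hs ltnNge leqnSn.
Qed.


Lemma Qf_join_l (G H : graph) (y : gV (gjoin G H) -> R) a :
  Qf y (inl a) = Qf (fun b => y (inl b)) a + \sum_c (y (inl a) + y (inr c)).
Proof.
rewrite /Qf big_sumType /=; congr (_ + _); apply: eq_bigr => c _.
by rewrite mul1r.
Qed.

Lemma Qf_join_r (G H : graph) (y : gV (gjoin G H) -> R) c :
  Qf y (inr c) = \sum_a (y (inr c) + y (inl a)) + Qf (fun d => y (inr d)) c.
Proof.
rewrite /Qf big_sumType /=; congr (_ + _); apply: eq_bigr => a _.
by rewrite mul1r.
Qed.

Lemma Qf_union_l (G H : graph) (y : gV (gunion G H) -> R) a :
  Qf y (inl a) = Qf (fun b => y (inl b)) a.
Proof.
rewrite /Qf big_sumType /= [X in _ + X]big1 ?addr0 //.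
by move=> c _; rewrite mul0r.
Qed.

Lemma Qf_union_r (G H : graph) (y : gV (gunion G H) -> R) c :
  Qf y (inr c) = Qf (fun d => y (inr d)) c.
Proof.
rewrite /Qf big_sumType /= [X in X + _]big1 ?add0r //.
by move=> a _; rewrite mul0r.
Qed.

Lemma Qf_K1 (y : gV (Kc 1) -> R) a : Qf y a = 0.
Proof.
rewrite /Qf big1 // => b _.
by rewrite /= (ord1 a) (ord1 b) eqxx mul0r.
Qed.

Lemma symg_join G H : symg G -> symg H -> symg (gjoin G H).
Proof. by move=> hG hH [a|a] [b|b] //=. Qed.

Lemma symg_union G H : symg G -> symg H -> symg (gunion G H).
Proof. by move=> hG hH [a|a] [b|b] //=. Qed.

Lemma symg_Kc m : symg (Kc m).
Proof. by move=> a b /=; rewrite eq_sym. Qed.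

Lemma symg_copies k H : symg H -> symg (copies k H).
Proof.
move=> hH; elim: k => [|k IH]; first by case.
exact: symg_union.
Qed.

Lemma symg_star s : symg (star s).
Proof. by move=> a b /=; rewrite eq_sym orbC. Qed.

Lemma symg_starplus s : symg (starplus s).
Proof.
move=> a b /=; rewrite eq_sym [((a : nat) == 0) || _]orbC.
by case: ((b : nat) == 1); case: ((a : nat) == 2); case: ((b : nat) == 2); case: ((a : nat) == 1); rewrite /= ?orbT ?orbF.
Qed.

Lemma symg_K11 n : symg (K11plus n).
Proof.
move=> a b /=; rewrite eq_sym; case: (b != a) => //=.
by case: ((a : nat) < 2)%N; case: ((b : nat) < 2)%N; case: ((a : nat) == 2); case: ((b : nat) == 3);
  case: ((a : nat) == 3); case: ((b : nat) == 2).
Qed.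

Lemma deg_K4 (a : 'I_4) : \sum_(b : 'I_4) (a != b)%:R = 3 :> R.
Proof.
rewrite !big_ord_recr big_ord0 /=.
by case: a => [[|[|[|[|?]]]] ?] //=; rewrite /= ?add0r ?addr0;
  rewrite -?natrD.
Qed.

Lemma deg_copies k (w : gV (copies k (Kc 4))) :
  \sum_w' (gE w w')%:R = 3 :> R.
Proof.
elim: k w => [|k IH] w; first by case: w.
case: w => [a|a].
  by rewrite big_sumType /= big1_eq addr0 deg_K4.
by rewrite big_sumType /= big1_eq add0r IH.
Qed.

Lemma Qf_copies_const k (y : gV (copies k (Kc 4)) -> R) t w :
  (forall w', y w' = t) -> Qf y w = 6 * t.
Proof.
move=> Hy; rewrite /Qf.
under eq_bigr => w' _ do rewrite !Hy.
rewrite -big_distrl /= deg_copies; ring.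
Qed.

Lemma card_copies k : #|gV (copies k (Kc 4))| = (4 * k)%N.
Proof.
elim: k => [|k IH]; first by rewrite card_void.
by rewrite /= card_sum card_ord IH mulnS.
Qed.


Definition jfun (H : graph) (u : R) (z : gV H -> R) : gV (gjoin (Kc 1) H) -> R :=
  fun v => match v with inl _ => u | inr h => z h end.

Lemma bound_join (H : graph) (hs : symg H) (z : gV H -> R) (c : R) :
  (forall h, 0 < z h) -> \sum_h (1 + z h) <= c ->
  (forall h, 1 + z h + Qf z h <= c * z h) ->
  forall b, eigenvalue (sQ R (gjoin (Kc 1) H)) b -> b <= c.
Proof.
move=> zpos Hsum Hh b Hb.
apply: (@eig_le _ (symg_join (@symg_Kc 1) hs) (jfun 1 z) c b) => //.
- by case=> [a|h] //=; exact: ltr01.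
- case=> [a|h].
    by rewrite Qf_join_l Qf_K1 add0r mulr1.
  rewrite Qf_join_r big_ord1 /=.
  by rewrite (addrC (z h)); exact: Hh.
Qed.

Lemma eig3_join (H : graph) (hs : symg H) (z : gV H -> R) h0 :
  z h0 != 0 -> \sum_h z h = 0 -> (forall h, Qf z h = 2 * z h) ->
  eigenvalue (sQ R (gjoin (Kc 1) H)) 3.
Proof.
move=> zh0 Hsum Hh.
apply: (@eig_of_fun _ (symg_join (@symg_Kc 1) hs) (jfun 0 z) 3 (inr h0)) => //.
case=> [a|h].
  rewrite Qf_join_l Qf_K1 add0r /= mulr0.
  under eq_bigr => c _ do rewrite add0r.
  exact: Hsum.
rewrite Qf_join_r big_ord1 /= addr0.
have -> : Qf (fun d => jfun 0 z (inr d)) h = Qf z h by [].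
rewrite Hh; ring.
Qed.

Definition eigC_prop (C : graph) (z : gV C -> R) :=
  [/\ exists h, z h != 0, \sum_h z h = 0 & forall h, Qf z h = 2 * z h].

Definition ufun (S C : graph) (zS : gV S -> R) (zC : gV C -> R) : gV (gunion S C) -> R :=
  fun v => match v with inl a => zS a | inr c => zC c end.

Lemma eigC_union (S C : graph) (zC : gV C -> R) :
  eigC_prop zC -> eigC_prop (ufun (fun _ : gV S => 0) zC).
Proof.
case=> [[h0 Hh0] Hsum Hh]; split.
- by exists (inr h0).
- by rewrite big_sumType /= big1_eq add0r.
- case=> [a|c].
    rewrite Qf_union_l /= mulr0 /Qf big1 // => b _; by rewrite addr0 mulr0.
  by rewrite Qf_union_r /=; apply: Hh.
Qed.

Definition dK4 (a : 'I_4) : R := ((a == ord0)%:R - ((a : nat) == 1%N)%:R).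

Lemma eigC_copies k : exists z : gV (copies k.+1 (Kc 4)) -> R, eigC_prop z.
Proof.
exists (@ufun (Kc 4) (copies k (Kc 4)) dK4 (fun _ => 0)); split.
- exists (inl ord0); rewrite /= /dK4 /= subr0; exact: oner_neq0.
- rewrite big_sumType /= big1_eq addr0 /dK4.
  by rewrite !big_ord_recr big_ord0 /=; ring.
- case=> [a|c].
    rewrite Qf_union_l /= /Qf /dK4 !big_ord_recr big_ord0 /=.
    by case: a => [[|[|[|[|?]]]] ?] //=; ring.
  rewrite Qf_union_r /= mulr0 /Qf big1 // => b _; by rewrite addr0 mulr0.
Qed.


Lemma sum_const_from (F : nat -> R) m n x :
  (forall j, (m <= j < n)%N -> F j = x) -> \sum_(m <= j < n) F j = x *+ (n - m).
Proof. by move=> H; rewrite (eq_big_nat _ _ H) sumr_const_nat. Qed.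

Definition spf (g a b : R) (j : nat) : R :=
  if (j == 0)%N then g else if (j < 3)%N then a else b.

Lemma Qf_starplus s' g a b (i : 'I_s'.+3) :
  Qf (G := starplus s'.+2) (fun j => spf g a b j) i =
   if (i == 0 :> nat) then (g + a) *+ 2 + (g + b) *+ s'
   else if (i < 3)%N then (a + g) + (a + a) else b + g.
Proof.
rewrite /Qf /=.
under eq_bigr => j _ do rewrite -val_eqE /=.
rewrite -(big_mkord xpredT (fun j => (((i : nat) != j) && (((i : nat) == 0%N) || (j == 0%N))
   || ((i : nat) == 1%N) && (j == 2%N) || ((i : nat) == 2%N) && (j == 1%N))%:R
   * (spf g a b i + spf g a b j))).
rewrite big_ltn // big_ltn // big_ltn //.
case: i => [[|[|[|i']]] Hi] /=.
- rewrite (@sum_const_from _ _ _ (g + b)); last first.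
    move=> j /andP [hj _]; rewrite /spf; case: j hj => [|[|[|j]]] //= _.
    by rewrite mul1r.
  rewrite /spf /=. have -> : (s'.+3 - 3 = s')%N by lia.
  ring.
- rewrite (@sum_const_from _ _ _ 0); last first.
    by move=> j /andP [hj _]; rewrite /spf; case: j hj => [|[|[|j]]] //= _; rewrite mul0r.
  rewrite /spf /= mul0rn; ring.
- rewrite (@sum_const_from _ _ _ 0); last first.
    by move=> j /andP [hj _]; rewrite /spf; case: j hj => [|[|[|j]]] //= _; rewrite mul0r.
  rewrite /spf /= mul0rn; ring.
- rewrite (@sum_const_from _ _ _ 0); last first.
    move=> j /andP [hj _]; rewrite /spf; case: j hj => [|[|[|j]]] //= _.
    by rewrite andbF mul0r.
  rewrite /spf /= mul0rn; ring.
Qed.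


Lemma sum_starplus s' g a b :
  \sum_(i : gV (starplus s'.+2)) (1 + spf g a b i) =
    (1 + g) + (1 + a) *+ 2 + (1 + b) *+ s'.
Proof.
rewrite /=.
rewrite -(big_mkord xpredT (fun j => 1 + spf g a b j)).
rewrite big_ltn // big_ltn // big_ltn //.
rewrite (@sum_const_from _ _ _ (1 + b)); last first.
  by move=> j /andP [hj _]; rewrite /spf; case: j hj => [|[|[|j]]].
rewrite /spf /=. have -> : (s'.+3 - 3 = s')%N by lia.
ring.
Qed.

Definition kf (Y Z : R) (j : nat) : R :=
  if (j < 2)%N then 1 else if (j < 4)%N then Y else Z.

Lemma Qf_K11 n' Y Z (i : 'I_n'.+4) :
  Qf (G := K11plus n'.+4) (fun j => kf Y Z j) i =
   if (i < 2)%N then 2 + (1 + Y) *+ 2 + (1 + Z) *+ n'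
   else if (i < 4)%N then (Y + 1) *+ 2 + (Y + Y) else (Z + 1) *+ 2.
Proof.
rewrite /Qf /=.
under eq_bigr => j _ do rewrite -val_eqE /=.
rewrite -(big_mkord xpredT (fun j => (((i : nat) != j) && [|| ((i : nat) < 2)%N, (j < 2)%N,
         ((i : nat) == 2%N) && (j == 3%N) | ((i : nat) == 3%N) && (j == 2%N)])%:R
   * (kf Y Z i + kf Y Z j))).
rewrite big_ltn // big_ltn // big_ltn // big_ltn //.
case: i => [[|[|[|[|i']]]] Hi] /=.
- rewrite (@sum_const_from _ _ _ (1 + Z)); last first.
    by move=> j /andP [hj _]; rewrite /kf; case: j hj => [|[|[|[|j]]]] //= _; rewrite mul1r.
  rewrite /kf /=. have -> : (n'.+4 - 4 = n')%N by lia.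
  ring.
- rewrite (@sum_const_from _ _ _ (1 + Z)); last first.
    by move=> j /andP [hj _]; rewrite /kf; case: j hj => [|[|[|[|j]]]] //= _; rewrite mul1r.
  rewrite /kf /=. have -> : (n'.+4 - 4 = n')%N by lia.
  ring.
- rewrite (@sum_const_from _ _ _ 0); last first.
    by move=> j /andP [hj _]; rewrite /kf; case: j hj => [|[|[|[|j]]]] //= _; rewrite mul0r.
  rewrite /kf /= mul0rn; ring.
- rewrite (@sum_const_from _ _ _ 0); last first.
    by move=> j /andP [hj _]; rewrite /kf; case: j hj => [|[|[|[|j]]]] //= _; rewrite mul0r.
  rewrite /kf /= mul0rn; ring.
- rewrite (@sum_const_from _ _ _ 0); last first.
    move=> j /andP [hj _]; rewrite /kf; case: j hj => [|[|[|[|j]]]] //= _.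
    by rewrite !andbF mul0r.
  rewrite /kf /= mul0rn; ring.
Qed.

Lemma Qf_star1 p (i : 'I_2) : Qf (G := star 1) (fun _ => p) i = p + p.
Proof.
rewrite /Qf /= !big_ord_recr big_ord0 /=.
by case: i => [[|[|?]] ?] //=; ring.
Qed.

Lemma ineq1 (N t : R) : 9 <= N -> (N + 43/25 - 7) * t = 1 -> 
  (N - 1) * (1 + t) <= N + 43/25.
Proof. move=> hN ht. nra. Qed.

Lemma ineq3 (N t p : R) : 7 <= N -> (N + 43/25 - 7) * t = 1 -> (N + 43/25 - 3) * p = 1 ->
  2 * (1 + p) + (N - 3) * (1 + t) <= N + 43/25.
Proof.
move=> hN ht hp.
have t0 : 0 < t by nra.
have p0 : 0 < p by nra.
have tle : t <= 25/43 by nra.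
have ple : p <= 25/143 by nra.
lra.
Qed.

Lemma ineq4 (N S t a b : R) : 2 <= S -> S <= N - 6 -> (N + 43/25 - 7) * t = 1 ->
  (N + 43/25 - 4) * a = 3/2 -> (N + 43/25 - 2) * b = 3/2 ->
  (1 + 1/2) + 2 * (1 + a) + (S - 2) * (1 + b) + (N - S - 2) * (1 + t) <= N + 43/25.
Proof.
move=> h1 h2 ht ha hb.
have t0 : 0 < t by nra.
have a0 : 0 < a by nra.
have b0 : 0 < b by nra.
have tle : t <= 25/68 by nra.
have ale : a <= 75/286 by nra.
have [bt|tb] := lerP b t.
  have : (S - 2) * (b - t) <= 0 by nra.
  lra.
have : (N - 6 - S) * (t - b) <= 0 by nra.
lra.
Qed.

Lemma ineq2 (N t p : R) : 10 <= N -> (N + 43/25 - 7) * t = 1 -> (N + 43/25 - 1) * p = 1 ->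
  (1 + p) + (N - 2) * (1 + t) <= N + 43/25.
Proof.
move=> hN ht hp.
have t0 : 0 < t by nra.
have p0 : 0 < p by nra.
have tle : t <= 25/118 by nra.
have ple : p <= 25/268 by nra.
lra.
Qed.

Lemma ineq4c (N S a b : R) : 2 <= S -> S <= N - 6 ->
  (N + 43/25 - 4) * a = 3/2 -> (N + 43/25 - 2) * b = 3/2 ->
  1 + 1/2 + ((1/2 + a) * 2 + (1/2 + b) * (S - 2)) <= (N + 43/25) * (1/2).
Proof.
move=> h1 h2 ha hb.
have a0 : 0 < a by nra.
have b0 : 0 < b by nra.
have ale : a <= 75/286 by nra.
have : (N - 6 - S) * b >= 0 by nra.
nra.
Qed.

Definition fK (N l : R) := (l - N) * (l - 4) * (l - 2) - 4 * (l - 2) - 2 * (N - 4) * (l - 4).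

Lemma fK_c (N : R) : 7 <= N -> fK N (N + 43/25) < 0.
Proof. rewrite /fK => hN; have := sqr_ge0 (N - 1299/175); nra. Qed.

Lemma fK_top (N : R) : 7 <= N -> 0 < fK N (N + 3).
Proof. rewrite /fK => hN; nra. Qed.

Lemma fK_root (N : R) : 7 <= N -> exists2 l, N + 43/25 < l & fK N l = 0.
Proof.
move=> hN.
pose p : {poly R} := ('X - N%:P) * ('X - 4%:P) * ('X - 2%:P) - 4%:P * ('X - 2%:P)
   - (2 * (N - 4))%:P * ('X - 4%:P).
have pE : forall x, p.[x] = fK N x by move=> x; rewrite /p !hornerE /fK.
have H1 : N + 43/25 <= N + 3 by lra.
have H2 : p.[N + 43/25] <= 0 <= p.[N + 3].
  apply/andP; split; apply: ltW; rewrite pE; [exact: fK_c hN | exact: fK_top hN].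
have [l /andP [h1 h2] hr] := @poly_ivt _ p _ _ H1 H2.
exists l => //; last by rewrite -pE; apply/eqP.
rewrite lt_neqAle h1 andbT; apply/eqP => E.
have := fK_c hN; rewrite E -pE (rootP hr); lra.
Qed.

Lemma K11_eig n' : (7 <= n'.+4)%N ->
  exists2 l, (n'.+4)%:R + 43/25 < l & eigenvalue (sQ R (K11plus n'.+4)) l.
Proof.
move=> hn.
have hN : 7 <= (n'.+4)%:R :> R by rewrite ler_nat.
have [l hl fl] := fK_root hN.
exists l => //.
have l4 : l - 4 != 0 by apply/eqP; lra.
have l2 : l - 2 != 0 by apply/eqP; lra.
pose Y := 2 / (l - 4); pose Z := 2 / (l - 2).
apply: (@eig_of_fun _ (@symg_K11 _) (fun j => kf Y Z j) l ord0).
  by rewrite /kf /= oner_neq0.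
move=> i; rewrite Qf_K11 /kf.
case: ifP => h1; [|case: ifP => h2].
- move: fl; rewrite /fK -addn4 natrD => fl.
  set M := n'%:R in fl *.
  have E : (2 + (1 + Y) *+ 2 + (1 + Z) *+ n' - l) * ((l - 4) * (l - 2)) = - fK (M + 4) l.
    rewrite /fK /Y /Z -mulr_natr -/M; field; by apply/andP; split.
  move: E; rewrite /fK fl oppr0 => /eqP; rewrite mulf_eq0 mulf_eq0 (negPf l4) (negPf l2) !orbF.
  rewrite subr_eq0 => /eqP ->; ring.
- rewrite /Y; field; exact: l4.
- rewrite /Z; field; exact: l2.
Qed.


Lemma final_of (G : graph) (n : nat) :
  (7 <= n)%N -> (forall b, eigenvalue (sQ R G) b -> b <= n%:R + 43/25) ->
  (exists a0, eigenvalue (sQ R G) a0) ->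
  (exists a : R, is_q G a) /\ (exists b : R, is_q (K11plus n) b) /\
  (forall a b : R, is_q G a -> is_q (K11plus n) b -> a < b).
Proof.
case: n => [|[|[|[|n']]]] // hn hc [a0 ha0].
have [l hl hK] := K11_eig hn.
split; first by have [a [h1 h2]] := max_eig ha0; exists a.
split; first by have [a [h1 h2]] := max_eig hK; exists a.
move=> a b [ha _] [_ hb].
apply: le_lt_trans (hc _ ha) _.
exact: lt_le_trans hl (hb _ hK).
Qed.

Lemma bound_union (S : graph) (hS : symg S) k (zS : gV S -> R) t c :
  0 < t -> (forall v, 0 < zS v) ->
  \sum_v (1 + zS v) + (1 + t) *+ (4 * k) <= c ->
  (forall v, 1 + zS v + Qf zS v <= c * zS v) -> 1 + t + 6 * t <= c * t ->
  forall b, eigenvalue (sQ R (gjoin (Kc 1) (gunion S (copies k (Kc 4))))) b -> b <= c.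
Proof.
move=> t0 zpos Hsum Hv Ht.
apply: (@bound_join _ (symg_union hS (@symg_copies k _ (@symg_Kc 4))) (@ufun S (copies k (Kc 4)) zS (fun _ => t))).
- by case.
- by rewrite big_sumType /= sumr_const card_copies.
- case=> [v|w].
    by rewrite Qf_union_l; exact: Hv.
  by rewrite Qf_union_r (@Qf_copies_const _ _ t).
Qed.

Lemma bound_copies k t c :
  0 < t -> (1 + t) *+ (4 * k) <= c -> 1 + t + 6 * t <= c * t ->
  forall b, eigenvalue (sQ R (gjoin (Kc 1) (copies k (Kc 4)))) b -> b <= c.
Proof.
move=> t0 Hsum Ht.
apply: (@bound_join _ (@symg_copies k _ (@symg_Kc 4)) (fun _ => t)) => //.
- by rewrite sumr_const card_copies.
- by move=> w; rewrite (@Qf_copies_const _ _ t).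
Qed.


Definition Concl n G := (exists a : R, is_q G a) /\ (exists b : R, is_q (K11plus n) b) /\
  (forall a b : R, is_q G a -> is_q (K11plus n) b -> a < b).

Lemma fam1_ok n k : (9 <= n)%N -> (4 * k = n - 1)%N ->
  Concl n (gjoin (Kc 1) (copies k (Kc 4))).
Proof.
move=> hn hk.
have eN : n%:R = (4 * k)%:R + 1 :> R.
  have -> : n = (4 * k + 1)%N by lia.
  by rewrite natrD.
apply: final_of; first by lia.
- rewrite eN; set K := (4 * k)%:R : R.
  have hK : 8 <= K by rewrite /K ler_nat; lia.
  set c := K + 1 + 43/25.
  have c7 : c - 7 != 0 by apply/eqP; rewrite /c; lra.
  pose t := (c - 7)^-1.
  have ht : (c - 7) * t = 1 by rewrite mulfV.
  have t0 : 0 < t by rewrite invr_gt0 /c; lra.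
  apply: (@bound_copies _ t) => //.
  + rewrite -mulr_natr -/K.
    have := @ineq1 (K + 1) t; rewrite /c in ht *; lra.
  + rewrite /c in ht *; lra.
- case: k hk eN => [|k'] hk eN; first by lia.
  have [z [[h0 hz0] hs hq]] := eigC_copies k'.
  exists 3; exact: (eig3_join (@symg_copies _ _ (@symg_Kc 4)) hz0 hs hq).
Qed.


Lemma fam2_ok n k : (10 <= n)%N -> (4 * k = n - 2)%N ->
  Concl n (gjoin (Kc 1) (gunion (Kc 1) (copies k (Kc 4)))).
Proof.
move=> hn hk.
have eN : n%:R = (4 * k)%:R + 2 :> R.
  have -> : n = (4 * k + 2)%N by lia.
  by rewrite natrD.
apply: final_of; first by lia.
- rewrite eN; set K := (4 * k)%:R : R.
  have hK : 8 <= K by rewrite /K ler_nat; lia.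
  set c := K + 2 + 43/25.
  have c7 : c - 7 != 0 by apply/eqP; rewrite /c; lra.
  have c1 : c - 1 != 0 by apply/eqP; rewrite /c; lra.
  pose t := (c - 7)^-1; pose p := (c - 1)^-1.
  have ht : (c - 7) * t = 1 by rewrite mulfV.
  have hp : (c - 1) * p = 1 by rewrite mulfV.
  have t0 : 0 < t by rewrite invr_gt0 /c; lra.
  have p0 : 0 < p by rewrite invr_gt0 /c; lra.
  apply: (@bound_union _ (@symg_Kc 1) k (fun _ => p) t) => //.
  + rewrite sumr_const card_ord -mulr_natr -/K.
    have := @ineq2 (K + 2) t p; rewrite /c in ht hp *; lra.
  + by move=> v; rewrite Qf_K1; rewrite /c in hp *; lra.
  + rewrite /c in ht *; lra.
- case: k hk eN => [|k'] hk eN; first by lia.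
  have [z Hz] := eigC_copies k'.
  have [[h0 hz0] hs hq] := eigC_union (Kc 1) Hz.
  exists 3; exact: (eig3_join (symg_union (@symg_Kc 1) (@symg_copies _ _ (@symg_Kc 4))) hz0 hs hq).
Qed.

Lemma fam3_ok n k : (7 <= n)%N -> (4 * k = n - 3)%N ->
  Concl n (gjoin (Kc 1) (gunion (star 1) (copies k (Kc 4)))).
Proof.
move=> hn hk.
have eN : n%:R = (4 * k)%:R + 3 :> R.
  have -> : n = (4 * k + 3)%N by lia.
  by rewrite natrD.
apply: final_of; first by lia.
- rewrite eN; set K := (4 * k)%:R : R.
  have hK : 4 <= K by rewrite /K ler_nat; lia.
  set c := K + 3 + 43/25.
  have c7 : c - 7 != 0 by apply/eqP; rewrite /c; lra.
  have c3 : c - 3 != 0 by apply/eqP; rewrite /c; lra.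
  pose t := (c - 7)^-1; pose p := (c - 3)^-1.
  have ht : (c - 7) * t = 1 by rewrite mulfV.
  have hp : (c - 3) * p = 1 by rewrite mulfV.
  have t0 : 0 < t by rewrite invr_gt0 /c; lra.
  have p0 : 0 < p by rewrite invr_gt0 /c; lra.
  apply: (@bound_union _ (@symg_star 1) k (fun _ => p) t) => //.
  + rewrite sumr_const card_ord -mulr_natr -/K.
    have := @ineq3 (K + 3) t p; rewrite /c in ht hp *; lra.
  + by move=> v; rewrite Qf_star1; rewrite /c in hp *; lra.
  + rewrite /c in ht *; lra.
- case: k hk eN => [|k'] hk eN; first by lia.
  have [z Hz] := eigC_copies k'.
  have [[h0 hz0] hs hq] := eigC_union (star 1) Hz.
  exists 3; exact: (eig3_join (symg_union (@symg_star 1) (@symg_copies _ _ (@symg_Kc 4))) hz0 hs hq).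
Qed.


Lemma fam4_ok n s k : (2 <= s)%N -> (s <= n - 6)%N -> (4 * k = n - s - 2)%N ->
  Concl n (gjoin (Kc 1) (gunion (starplus s) (copies k (Kc 4)))).
Proof.
case: s => [|[|s']] // _ hs hk.
have eN : n%:R = (4 * k)%:R + s'%:R + 4 :> R.
  have -> : n = (4 * k + s' + 4)%N by lia.
  by rewrite !natrD.
apply: final_of; first by lia.
- rewrite eN; set K := (4 * k)%:R : R; set s0 := s'%:R : R.
  have hK : 4 <= K by rewrite /K ler_nat; lia.
  have hs0 : 0 <= s0 by rewrite /s0 ler0n.
  set c := K + s0 + 4 + 43/25.
  have c7 : c - 7 != 0 by apply/eqP; rewrite /c; lra.
  have c4 : c - 4 != 0 by apply/eqP; rewrite /c; lra.
  have c2 : c - 2 != 0 by apply/eqP; rewrite /c; lra.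
  pose t := (c - 7)^-1; pose a := 3/2 * (c - 4)^-1; pose b := 3/2 * (c - 2)^-1.
  have ht : (c - 7) * t = 1 by rewrite mulfV.
  have ha : (c - 4) * a = 3/2 by rewrite /a mulrCA mulfV ?mulr1.
  have hb : (c - 2) * b = 3/2 by rewrite /b mulrCA mulfV ?mulr1.
  have t0 : 0 < t by rewrite invr_gt0 /c; lra.
  have a0 : 0 < a by rewrite /a mulr_gt0 // ?invr_gt0 /c; lra.
  have b0 : 0 < b by rewrite /b mulr_gt0 // ?invr_gt0 /c; lra.
  apply: (@bound_union _ (@symg_starplus s'.+2) k (fun j => spf (1/2) a b j) t) => //.
  + by move=> v; rewrite /spf; case: ifP => _; [lra| case: ifP => _; lra].
  + rewrite sum_starplus -[(1 + a) *+ 2]mulr_natr -[(1 + b) *+ s']mulr_natr -[(1 + t) *+ (4 * k)]mulr_natr -/K -/s0.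
    have h1 : 2 <= s0 + 2 by lra.
    have h2 : s0 + 2 <= K + s0 + 4 - 6 by lra.
    have := ineq4 h1 h2 ht ha hb; rewrite /c; lra.
  + move=> v; rewrite Qf_starplus /spf.
    case: ifP => _; [|case: ifP => _].
    * rewrite -[(_ + a) *+ 2]mulr_natr -[(_ + b) *+ s']mulr_natr -/s0.
      have h1 : 2 <= s0 + 2 by lra.
      have h2 : s0 + 2 <= K + s0 + 4 - 6 by lra.
      have := ineq4c h1 h2 ha hb; rewrite /c; lra.
    * rewrite /c in ha *; lra.
    * rewrite /c in hb *; lra.
  + rewrite /c in ht *; lra.
- case: k hk eN => [|k'] hk eN; first by lia.
  have [z Hz] := eigC_copies k'.
  have [[h0 hz0] hsum hq] := eigC_union (starplus s'.+2) Hz.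
  exists 3; exact: (eig3_join (symg_union (@symg_starplus _) (@symg_copies _ _ (@symg_Kc 4))) hz0 hsum hq).
Qed.

End Gen.

Unset Implicit Arguments.
Set Strict Implicit.

Theorem lemma2p10 (R : realType) (n : nat) (G : graph) :
  (7 <= n)%N -> lem_family n G ->
  (exists a : R, is_q G a) /\ (exists b : R, is_q (K11plus n) b) /\
  (forall a b : R, is_q G a -> is_q (K11plus n) b -> a < b).
Proof.
move=> hn; case.
- move=> h; apply: fam1_ok; lia.
- move=> h; apply: fam2_ok; lia.
- move=> h; apply: fam3_ok; lia.
- move=> s h1 h2 h3; apply: fam4_ok => //; lia.
Qed.
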